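(* Assume $F$ is coercive over the set $\{(\mathbf{W},\mathbf{z},\mathbf{a},\mathbf{b}) : h_l(z_l)-\epsilon\le a_l\le h_l(z_l)+\epsilon,\ l=1,\dots,L-1\}$. For the TIAM iterates described in the context, let $M>0$ be a Lipschitz constant of $\nabla\phi$ (gradient with respect to $(a,W,z,b)$) on a bounded set containing all iterates and their extrapolations, and set $C_1=\max(M,M+\theta_1^{k+1},\dots,M+\theta_L^{k+1})$. Then for every $k\in\mathbb{N}$ there exists $g_1^{k+1}\in\partial_{\mathbf{W}^{k+1}}F$ such that $\|g_1^{k+1}\|\le C_1\big(\|\mathbf{W}^{k+1}-\mathbf{W}^k\|+\|\mathbf{z}^{k+1}-\mathbf{z}^k\|+\|\mathbf{a}^{k+1}-\mathbf{a}^k\|+\|\mathbf{b}^{k+1}-\mathbf{b}^k\|+\|\mathbf{W}^k-\mathbf{W}^{k-1}\|+\|\mathbf{b}^k-\mathbf{b}^{k-1}\|+\|\mathbf{z}^k-\mathbf{z}^{k-1}\|\big)$, where $\partial_{\mathbf{W}^{k+1}}F$ denotes the limiting subdifferential of $F$ with respect to $\mathbf{W}$ at $(\mathbf{W}^{k+1},\mathbf{z}^{k+1},\mathbf{a}^{k+1},\mathbf{b}^{k+1})$.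
   Context: Problem. Fix $L\ge 1$, dimensions $n_0=d,n_1,\dots,n_L$, an input $a_0=x\in\mathbb{R}^d$, a label vector $y$, and parameters $\rho>0$, $\epsilon>0$, $p_1,p_2,p_3\in[0,1)$. Variables: $\mathbf{W}=(W_l)_{l=1}^L$, $W_l\in\mathbb{R}^{n_l\times n_{l-1}}$; $\mathbf{b}=(b_l)_{l=1}^L$, $\mathbf{z}=(z_l)_{l=1}^L$ with $b_l,z_l\in\mathbb{R}^{n_l}$; $\mathbf{a}=(a_l)_{l=1}^{L-1}$, $a_l\in\mathbb{R}^{n_l}$. The activations $h_l$ are continuous (applied componentwise); the loss $z_L\mapsto R(z_L;y)$ and the regularizers $\Omega_l$ are continuous, convex and proper, with $\Omega_l\ge 0$. Norms are Euclidean/Frobenius. Let $\phi(a_{l-1},W_l,z_l,b_l)=\frac{\rho}{2}\|z_l-W_la_{l-1}-b_l\|^2$ and $F(\mathbf{W},\mathbf{z},\mathbf{a},\mathbf{b})=R(z_L;y)+\sum_{l=1}^L\Omega_l(W_l)+\sum_{l=1}^L\phi(a_{l-1},W_l,z_l,b_l)$. The subdifferential $\partial_{\mathbf{W}}F$ is the product $\partial_{W_1}F\times\cdots\times\partial_{W_L}F$. Algorithm (TIAM). Iterates $(\mathbf{W}^k,\mathbf{z}^k,\mathbf{a}^k,\mathbf{b}^k)$, $k=0,1,\dots$. In iteration $k\to k+1$, for $l=1,\dots,L$ in order, the blocks $W_l$, $b_l$, $z_l$ and (if $l<L$) $a_l$ are updated in this order. For a block $u$: $\tilde u^{k+1}=u^k+p_1(u^k-u^{k-1})$,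 $\hat u^{k+1}=u^k+p_2(u^k-u^{k-1})$, and after computing $u^{k+1}$, $\bar u^{k+1}=u^{k+1}+p_3(u^{k+1}-u^k)$. Updates: (W) $W_l^{k+1}\in\arg\min_{W_l}\langle\nabla_{W_l}\phi(\bar a_{l-1}^{k+1},\hat W_l^{k+1},\bar z_l^k,\bar b_l^k),W_l-\tilde W_l^{k+1}\rangle+\frac{\theta_l^{k+1}}{2}\|W_l-\tilde W_l^{k+1}\|^2+\Omega_l(W_l)$, with $\theta_l^{k+1}>0$ chosen by backtracking so that $\phi(\bar a_{l-1}^{k+1},\tilde W_l^{k+1},\bar z_l^k,\bar b_l^k)+\langle\nabla_{W_l}\phi(\bar a_{l-1}^{k+1},\hat W_l^{k+1},\bar z_l^k,\bar b_l^k),W_l^{k+1}-\tilde W_l^{k+1}\rangle+\frac{\theta_l^{k+1}}{2}\|W_l^{k+1}-\tilde W_l^{k+1}\|^2\ge\phi(a_{l-1}^{k+1},W_l^{k+1},z_l^k,b_l^k)$. (b) $b_l^{k+1}=\tilde b_l^{k+1}-\nabla_{b_l}\phi(\bar a_{l-1}^{k+1},\bar W_l^{k+1},\bar z_l^k,\hat b_l^{k+1})/\xi_l^{k+1}$, with $\xi_l^{k+1}>0$ chosen by backtracking so that the analogous linearized model with parameter $\xi_l^{k+1}$ at $b_l^{k+1}$ dominates $\phi(a_{l-1}^{k+1},W_l^{k+1},z_l^k,b_l^{k+1})$. (z) For $l<L$: $z_l^{k+1}\in\arg\min_{z_l}\langle\nabla_{z_l}\phi(\bar a_{l-1}^{k+1},\bar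 W_l^{k+1},\hat z_l^{k+1},\bar b_l^{k+1}),z_l-\tilde z_l^{k+1}\rangle+\frac{\rho}{2}\|z_l-\tilde z_l^{k+1}\|^2$ subject to $h_l(z_l)-\epsilon\le a_l^k\le h_l(z_l)+\epsilon$; for $l=L$ the same objective plus $R(z_L;y)$, unconstrained. (a) $a_l^{k+1}\in\arg\min_{a_l}\langle\nabla_{a_l}\phi(\hat a_l^{k+1},\bar W_{l+1}^k,\bar z_{l+1}^k,\bar b_{l+1}^k),a_l-\tilde a_l^{k+1}\rangle+\frac{\tau_l^{k+1}}{2}\|a_l-\tilde a_l^{k+1}\|^2$ subject to $h_l(\bar z_l^{k+1})-\epsilon\le a_l\le h_l(\bar z_l^{k+1})+\epsilon$, with $\tau_l^{k+1}>0$ chosen by backtracking so that the linearized model at $a_l^{k+1}$ dominates $\phi(a_l^{k+1},W_{l+1}^k,z_{l+1}^k,b_{l+1}^k)$. Safeguard: if after a block update the value of $F$ (blocks already updated in this iteration at new values, others at iteration-$k$ values) is not smaller than before that block update, the block update is recomputed without acceleration: $\tilde u^{k+1}=\hat u^{k+1}=u^k$ and all extrapolated (barred) quantities of the other blocks are replaced by their non-extrapolated current values. *)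

(* Defs.v *)
From mathcomp Require Import all_boot all_order all_algebra.
From mathcomp Require Import reals.
Set Implicit Arguments. Unset Strict Implicit. Unset Printing Implicit Defensive.
Import Order.TTheory GRing.Theory Num.Theory.
Local Open Scope ring_scope.

Section Geometry.
Variable R : realType.

Definition minner m p (A B : 'M[R]_(m, p)) : R := \sum_i \sum_j A i j * B i j.
Definition msq m p (A : 'M[R]_(m, p)) : R := minner A A.
Definition mnorm m p (A : 'M[R]_(m, p)) : R := Num.sqrt (msq A).

Definition mconv m p (xs : nat -> 'M[R]_(m, p)) (x : 'M[R]_(m, p)) : Prop :=
  forall e : R, 0 < e -> exists N : nat, forall k, (N <= k)%N -> mnorm (xs k - x) < e.
Definition rconv (us : nat -> R) (u : R) : Prop :=
  forall e : R, 0 < e -> exists N : nat, forall k, (N <= k)%N -> `|us k - u| < e.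

(* Frechet (regular) subdifferential: v \in \hat\partial f(x) iff
   liminf_{y -> x, y <> x} (f y - f x - <v, y - x>) / ||y - x|| >= 0 *)
Definition frechet_subgrad m p (f : 'M[R]_(m, p) -> R) (x v : 'M[R]_(m, p)) : Prop :=
  forall e : R, 0 < e -> exists2 d : R, 0 < d & forall y, mnorm (y - x) < d ->
    f y - f x - minner v (y - x) >= - (e * mnorm (y - x)).

Definition limiting_subgrad m p (f : 'M[R]_(m, p) -> R) (x v : 'M[R]_(m, p)) : Prop :=
  exists (xs vs : nat -> 'M[R]_(m, p)),
    [/\ mconv xs x, rconv (fun k => f (xs k)) (f x),
        forall k, frechet_subgrad f (xs k) (vs k) & mconv vs v].

Definition mconvex m p (f : 'M[R]_(m, p) -> R) : Prop :=
  forall (A B : 'M[R]_(m, p)) (t : R), 0 <= t <= 1 ->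
    f (t *: A + (1 - t) *: B) <= t * f A + (1 - t) * f B.

Definition mcontinuous m p (f : 'M[R]_(m, p) -> R) : Prop :=
  forall A, forall e : R, 0 < e -> exists2 d : R, 0 < d &
    forall B, mnorm (B - A) < d -> `|f B - f A| < e.

Definition rcontinuous (f : R -> R) : Prop :=
  forall a, forall e : R, 0 < e -> exists2 d : R, 0 < d &
    forall b, `|b - a| < d -> `|f b - f a| < e.

End Geometry.

Section Network.
Variable R : realType.
Variable n : nat -> nat.   (* n 0 = d, n 1, ..., n L *)

(* a full family of layer variables; only layers 1..L (resp. 1..L-1 for a) matter *)
Definition Wfam := forall l : nat, 'M[R]_(n l, n l.-1).
Definition Vfam := forall l : nat, 'cV[R]_(n l).

Record St := mkSt { sW : Wfam; sz : Vfam; sa : Vfam; sb : Vfam }.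

Variable L : nat.
Variable x : 'cV[R]_(n 0).                         (* a_0 = x *)
Variable rho eps p1 p2 p3 : R.
Variable h : nat -> R -> R.                        (* activation h_l, componentwise *)
Variable loss : 'cV[R]_(n L) -> R.
Variable Om : forall l : nat, 'M[R]_(n l, n l.-1) -> R.

Definition aa (a : Vfam) (l : nat) : 'cV[R]_(n l) :=
  match l as l0 return 'cV[R]_(n l0) with 0 => x | l'.+1 => a l'.+1 end.

Definition phi m p (a : 'cV[R]_p) (W : 'M[R]_(m, p)) (z b : 'cV[R]_m) : R :=
  rho / 2 * msq (z - W *m a - b).

Definition gradW m p (a : 'cV[R]_p) (W : 'M[R]_(m, p)) (z b : 'cV[R]_m) : 'M[R]_(m, p) :=
  - rho *: ((z - W *m a - b) *m a^T).
Definition gradb m p (a : 'cV[R]_p) (W : 'M[R]_(m, p)) (z b : 'cV[R]_m) : 'cV[R]_m :=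
  - rho *: (z - W *m a - b).
Definition gradz m p (a : 'cV[R]_p) (W : 'M[R]_(m, p)) (z b : 'cV[R]_m) : 'cV[R]_m :=
  rho *: (z - W *m a - b).
Definition grada m p (a : 'cV[R]_p) (W : 'M[R]_(m, p)) (z b : 'cV[R]_m) : 'cV[R]_p :=
  - rho *: (W^T *m (z - W *m a - b)).

Definition quad_dist m p (a a' : 'cV[R]_p) (W W' : 'M[R]_(m, p)) (z z' b b' : 'cV[R]_m) : R :=
  Num.sqrt (msq (a - a') + msq (W - W') + msq (z - z') + msq (b - b')).
Definition grad_dist m p (a a' : 'cV[R]_p) (W W' : 'M[R]_(m, p)) (z z' b b' : 'cV[R]_m) : R :=
  Num.sqrt (msq (grada a W z b - grada a' W' z' b') + msq (gradW a W z b - gradW a' W' z' b')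
          + msq (gradz a W z b - gradz a' W' z' b') + msq (gradb a W z b - gradb a' W' z' b')).

Definition Fobj (s : St) : R :=
  loss (sz s L) + \sum_(1 <= l < L.+1) Om (sW s l)
  + \sum_(1 <= l < L.+1) phi (aa (sa s) l.-1) (sW s l) (sz s l) (sb s l).

Definition feas (l : nat) m (z a : 'cV[R]_m) : Prop :=
  forall i, h l (z i 0) - eps <= a i 0 <= h l (z i 0) + eps.

Definition constraint_set : St -> Prop :=
  fun s => forall l, (1 <= l < L)%N -> feas l (sz s l) (sa s l).

Definition Wnorm (W : Wfam) : R := Num.sqrt (\sum_(1 <= l < L.+1) msq (W l)).
Definition Vnorm (v : Vfam) : R := Num.sqrt (\sum_(1 <= l < L.+1) msq (v l)).
Definition Anorm (a : Vfam) : R := Num.sqrt (\sum_(1 <= l < L) msq (a l)).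
Definition Wsub (W W' : Wfam) : Wfam := fun l => W l - W' l.
Definition Vsub (v v' : Vfam) : Vfam := fun l => v l - v' l.
Definition stnorm (s : St) : R :=
  Num.sqrt (Wnorm (sW s) ^+ 2 + Vnorm (sz s) ^+ 2 + Anorm (sa s) ^+ 2 + Vnorm (sb s) ^+ 2).

Definition coercive_on (F : St -> R) (S : St -> Prop) : Prop :=
  forall K : R, exists r : R, forall s, S s -> r <= stnorm s -> K <= F s.

Definition setW (W : Wfam) (l : nat) (V : 'M[R]_(n l, n l.-1)) : Wfam :=
  fun j => match l =P j with
           | ReflectT e => eq_rect l (fun i => 'M[R]_(n i, n i.-1)) V j e
           | ReflectF _ => W j end.

(* ---------- one TIAM iteration k -> k+1 ----------
   P, C, N are the states at iterations k-1, k, k+1. *)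

Definition ex m p (q : R) (u u' : 'M[R]_(m, p)) := u + q *: (u - u').

(* state in which the blocks at positions < t (in the update order
   W_1,b_1,z_1,a_1,W_2,...) have their new values and the others the old ones;
   position of W_l, b_l, z_l, a_l is 4l, 4l+1, 4l+2, 4l+3. *)
Definition mix (C N : St) (t : nat) : St :=
  mkSt (fun j => if (4 * j < t)%N then sW N j else sW C j)
       (fun j => if (4 * j + 2 < t)%N then sz N j else sz C j)
       (fun j => if (4 * j + 3 < t)%N then sa N j else sa C j)
       (fun j => if (4 * j + 1 < t)%N then sb N j else sb C j).

Section Blocks.
Variables (P C : St) (l : nat).
(* q1, q2, q3 are the extrapolation weights used: (p1,p2,p3) for the
   accelerated update, (0,0,0) for the safeguarded non-accelerated one *)
Variables (q1 q2 q3 : R).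

Definition Wupd (theta : R) (N : St) : Prop :=
  let Wt := ex q1 (sW C l) (sW P l) in
  let Wh := ex q2 (sW C l) (sW P l) in
  let ab := ex q3 (aa (sa N) l.-1) (aa (sa C) l.-1) in
  let zb := ex q3 (sz C l) (sz P l) in
  let bb := ex q3 (sb C l) (sb P l) in
  let G := gradW ab Wh zb bb in
  let obj V := minner G (V - Wt) + theta / 2 * msq (V - Wt) + Om V in
  [/\ 0 < theta,
      forall V, obj (sW N l) <= obj V &
      phi ab Wt zb bb + minner G (sW N l - Wt) + theta / 2 * msq (sW N l - Wt)
        >= phi (aa (sa N) l.-1) (sW N l) (sz C l) (sb C l)].

Definition bupd (xi : R) (N : St) : Prop :=
  let bt := ex q1 (sb C l) (sb P l) in
  let bh := ex q2 (sb C l) (sb P l) in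
  let ab := ex q3 (aa (sa N) l.-1) (aa (sa C) l.-1) in
  let Wb := ex q3 (sW N l) (sW C l) in
  let zb := ex q3 (sz C l) (sz P l) in
  let G := gradb ab Wb zb bh in
  [/\ 0 < xi,
      sb N l = bt - xi^-1 *: G &
      phi ab Wb zb bt + minner G (sb N l - bt) + xi / 2 * msq (sb N l - bt)
        >= phi (aa (sa N) l.-1) (sW N l) (sz C l) (sb N l)].

Definition zupd (N : St) : Prop :=
  let zt := ex q1 (sz C l) (sz P l) in
  let zh := ex q2 (sz C l) (sz P l) in
  let ab := ex q3 (aa (sa N) l.-1) (aa (sa C) l.-1) in
  let Wb := ex q3 (sW N l) (sW C l) in
  let bb := ex q3 (sb N l) (sb C l) in
  let G := gradz ab Wb zh bb in
  let obj v := minner G (v - zt) + rho / 2 * msq (v - zt) in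
  feas l (sz N l) (sa C l) /\
  (forall v, feas l v (sa C l) -> obj (sz N l) <= obj v).

Definition aupd (tau : R) (N : St) : Prop :=
  let at_ := ex q1 (sa C l) (sa P l) in
  let ah := ex q2 (sa C l) (sa P l) in
  let Wb := ex q3 (sW C l.+1) (sW P l.+1) in
  let zb := ex q3 (sz C l.+1) (sz P l.+1) in
  let bb := ex q3 (sb C l.+1) (sb P l.+1) in
  let zbn := ex q3 (sz N l) (sz C l) in
  let G := grada ah Wb zb bb in
  let obj v := minner G (v - at_) + tau / 2 * msq (v - at_) in
  [/\ 0 < tau, feas l zbn (sa N l),
      (forall v, feas l zbn v -> obj (sa N l) <= obj v) &
      phi at_ Wb zb bb + minner G (sa N l - at_) + tau / 2 * msq (sa N l - at_)
        >= phi (sa N l) (sW C l.+1) (sz C l.+1) (sb C l.+1)].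
End Blocks.

Definition zupdL (P C : St) (q1 q2 q3 : R) (N : St) : Prop :=
  let zt := ex q1 (sz C L) (sz P L) in
  let zh := ex q2 (sz C L) (sz P L) in
  let ab := ex q3 (aa (sa N) L.-1) (aa (sa C) L.-1) in
  let Wb := ex q3 (sW N L) (sW C L) in
  let bb := ex q3 (sb N L) (sb C L) in
  let G := gradz ab Wb zh bb in
  let obj v := minner G (v - zt) + rho / 2 * msq (v - zt) + loss v in
  forall v, obj (sz N L) <= obj v.

(* Either the accelerated update decreases F and is kept, or an accelerated
   candidate was computed, did not decrease F, and the final value is the
   non-accelerated update. *)
Definition safeguarded (C N : St) (t : nat)
    (acc : St -> Prop) (nonacc : St -> Prop) (acc_some : St -> Prop) : Prop :=
  (acc N /\ Fobj (mix C N t.+1) < Fobj (mix C N t)) \/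
  ((exists N' : St, [/\ mix C N' t = mix C N t, acc_some N' &
                       Fobj (mix C N t) <= Fobj (mix C N' t.+1)])
   /\ nonacc N).

(* one TIAM iteration; theta, xi, tau : layer -> step actually used *)
Definition tiam_step (P C N : St) (theta xi tau : nat -> R) : Prop :=
  [/\ forall l, (1 <= l <= L)%N ->
        safeguarded C N (4 * l)
          (Wupd P C l p1 p2 p3 (theta l)) (Wupd P C l 0 0 0 (theta l))
          (fun N' => exists th, Wupd P C l p1 p2 p3 th N'),
      forall l, (1 <= l <= L)%N ->
        safeguarded C N (4 * l + 1)
          (bupd P C l p1 p2 p3 (xi l)) (bupd P C l 0 0 0 (xi l))
          (fun N' => exists xi', bupd P C l p1 p2 p3 xi' N'),
      forall l, (1 <= l < L)%N ->
        safeguarded C N (4 * l + 2)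
          (zupd P C l p1 p2 p3) (zupd P C l 0 0 0) (zupd P C l p1 p2 p3),
      safeguarded C N (4 * L + 2)
          (zupdL P C p1 p2 p3) (zupdL P C 0 0 0) (zupdL P C p1 p2 p3) &
      forall l, (1 <= l < L)%N ->
        safeguarded C N (4 * l + 3)
          (aupd P C l p1 p2 p3 (tau l)) (aupd P C l 0 0 0 (tau l))
          (fun N' => exists ta, aupd P C l p1 p2 p3 ta N')].

(* iterates and their extrapolations of a block sequence u (u j = u^{j-1}) *)
Definition iter_pts m p (u : nat -> 'M[R]_(m, p)) (v : 'M[R]_(m, p)) : Prop :=
  exists j : nat, v = u j \/ exists2 q, q \in [:: p1; p2; p3] & v = ex q (u j.+1) (u j).

Definition bounded_set m p (S : 'M[R]_(m, p) -> Prop) : Prop :=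
  exists B : R, forall v, S v -> mnorm v <= B.

End Network.
Arguments setW : clear implicits.

(* Main.v *)
Require Import Defs.
From mathcomp Require Import all_boot all_order all_algebra reals.
From mathcomp Require Import ring lra.
From Stdlib Require Import ClassicalEpsilon.
Set Implicit Arguments. Unset Strict Implicit. Unset Printing Implicit Defensive.
Import Order.TTheory GRing.Theory Num.Theory.
Local Open Scope ring_scope.

Section Gen.
Variable R : realType.

Lemma quad_cs (a b c : R) : 0 <= a -> 0 <= b ->
  (forall t, 0 <= a + 2 * t * c + t ^+ 2 * b) -> c <= Num.sqrt a * Num.sqrt b.
Proof.
move=> a0 b0 H.
have hc2 : c ^+ 2 <= a * b.
  have [bz|bp] := eqVneq b 0.
    have cz : c = 0.
      apply/eqP; apply/negPn/negP => cn.
      have := H (- (a + 1) / (2 * c)).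
      have -> : 2 * (- (a + 1) / (2 * c)) * c = - (a + 1) by field.
      rewrite bz mulr0 addr0; lra.
    by rewrite cz bz !mulr0 expr0n.
  have bpos : 0 < b by rewrite lt_def bp b0.
  have := H (- c / b).
  have -> : a + 2 * (- c / b) * c + (- c / b) ^+ 2 * b = a - c ^+ 2 / b.
    by field; rewrite bp.
  rewrite subr_ge0 ler_pdivrMr //.
by apply: (le_trans (ler_norm c)); rewrite -sqrtrM // -sqrtr_sqr ler_wsqrtr.
Qed.

Lemma quad_tri (a b c : R) : 0 <= a -> 0 <= b ->
  (forall t, 0 <= a + 2 * t * c + t ^+ 2 * b) ->
  Num.sqrt (a + 2 * c + b) <= Num.sqrt a + Num.sqrt b.
Proof.
move=> a0 b0 H; have := quad_cs a0 b0 H => hc.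
rewrite -[X in _ <= X]ger0_norm ?addr_ge0 ?sqrtr_ge0 // -sqrtr_sqr ler_wsqrtr //.
rewrite sqrrD !sqr_sqrtr //.
rewrite mulr2n; lra.
Qed.

Lemma sqrt_add (a b : R) : 0 <= a -> 0 <= b -> Num.sqrt (a + b) <= Num.sqrt a + Num.sqrt b.
Proof.
move=> a0 b0; have := @quad_tri a b 0 a0 b0.
rewrite mulr0 addr0; apply=> t; by rewrite mulr0 addr0 addr_ge0 // mulr_ge0 // sqr_ge0.
Qed.

Lemma sumsq_tri (r : seq nat) (u v : nat -> R) :
  Num.sqrt (\sum_(j <- r) (u j + v j) ^+ 2) <=
  Num.sqrt (\sum_(j <- r) u j ^+ 2) + Num.sqrt (\sum_(j <- r) v j ^+ 2).
Proof.
have -> : \sum_(j <- r) (u j + v j) ^+ 2 =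
   \sum_(j <- r) u j ^+ 2 + 2 * \sum_(j <- r) u j * v j + \sum_(j <- r) v j ^+ 2.
  by rewrite mulr_sumr -!big_split /=; apply: eq_bigr => j _; ring.
apply: quad_tri; try by apply: sumr_ge0 => j _; rewrite sqr_ge0.
move=> t; have -> : \sum_(j <- r) u j ^+ 2 + 2 * t * \sum_(j <- r) u j * v j +
    t ^+ 2 * \sum_(j <- r) v j ^+ 2 = \sum_(j <- r) (u j + t * v j) ^+ 2.
  by rewrite !mulr_sumr -!big_split /=; apply: eq_bigr => j _; ring.
by apply: sumr_ge0 => j _; rewrite sqr_ge0.
Qed.

Lemma bigmax_le_seq (r : seq nat) (x0 : R) (F : nat -> R) j :
  j \in r -> F j <= \big[Num.max/x0]_(i <- r) F i.
Proof.
elim: r => // i r IH; rewrite inE big_cons => /orP [/eqP->|/IH h].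
  by rewrite le_max lexx.
by rewrite le_max h orbT.
Qed.

Lemma bigmax_ge0_seq (r : seq nat) (x0 : R) (F : nat -> R) :
  x0 <= \big[Num.max/x0]_(i <- r) F i.
Proof.
elim: r => [|i r IH]; first by rewrite big_nil.
by rewrite big_cons le_max IH orbT.
Qed.

Lemma sum_single (r : seq nat) (F : nat -> R) l : uniq r -> l \in r ->
  (forall j, j != l -> F j = 0) -> \sum_(j <- r) F j = F l.
Proof.
move=> ur lr H; rewrite (bigD1_seq l) //= big1 ?addr0 // => j; exact: H.
Qed.

Lemma nonneg_lim (c K : R) : 0 <= K -> (forall t, 0 < t <= 1 -> 0 <= t * c + t ^+ 2 * K) -> 0 <= c.
Proof.
move=> K0 H; rewrite leNgt; apply/negP => c0.
pose t := (- c) / (2 * (K - c)).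
have KC : 0 < K - c by lra.
have t0 : 0 < t by rewrite /t divr_gt0 // ?mulr_gt0 //; lra.
have tK : t * K <= - c / 2.
  rewrite /t mulrAC ler_pdivrMr; last by rewrite mulr_gt0.
  have : 0 <= c * c by nra.
  have -> : - c / 2 * (2 * (K - c)) = - c * K + c * c by field.
  lra.
have t1 : t <= 1.
  rewrite /t ler_pdivrMr; last by rewrite mulr_gt0.
  lra.
have := H t; rewrite t0 t1 => /(_ isT).
have : 0 < t * (- c / 2) by rewrite mulr_gt0 //; lra.
move=> h1 h2.
have : t ^+ 2 * K <= t * (- c / 2) by rewrite expr2 -mulrA ler_pM2l.
nra.
Qed.

End Gen.

Section Mx.
Variable R : realType.
Variables m p : nat.
Implicit Types A B C D : 'M[R]_(m, p).

Lemma minnerC A B : minner A B = minner B A.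
Proof. by apply: eq_bigr => i _; apply: eq_bigr => j _; rewrite mulrC. Qed.

Lemma minnerDl A B C : minner (A + B) C = minner A C + minner B C.
Proof.
rewrite /minner -big_split; apply: eq_bigr => i _ /=.
rewrite -big_split; apply: eq_bigr => j _ /=; by rewrite mxE mulrDl.
Qed.

Lemma minnerZl c A B : minner (c *: A) B = c * minner A B.
Proof.
rewrite /minner mulr_sumr; apply: eq_bigr => i _ /=.
rewrite mulr_sumr; apply: eq_bigr => j _ /=; by rewrite mxE mulrA.
Qed.

Lemma minnerNl A B : minner (- A) B = - minner A B.
Proof. by rewrite -scaleN1r minnerZl mulN1r. Qed.

Lemma minnerBl A B C : minner (A - B) C = minner A C - minner B C.
Proof. by rewrite minnerDl minnerNl. Qed.

Lemma minnerDr A B C : minner C (A + B) = minner C A + minner C B.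
Proof. by rewrite minnerC minnerDl !(minnerC C). Qed.

Lemma minnerZr c A B : minner B (c *: A) = c * minner B A.
Proof. by rewrite minnerC minnerZl minnerC. Qed.

Lemma minnerNr A B : minner B (- A) = - minner B A.
Proof. by rewrite minnerC minnerNl minnerC. Qed.

Lemma minner0r A : minner A 0 = 0.
Proof. by rewrite -(scale0r 0) minnerZr mul0r. Qed.

Lemma msqD A B : msq (A + B) = msq A + 2 * minner A B + msq B.
Proof.
rewrite /msq minnerDl !minnerDr (minnerC B A); ring.
Qed.

Lemma msq_ge0 A : 0 <= msq A.
Proof.
by apply: sumr_ge0 => i _; apply: sumr_ge0 => j _; rewrite -expr2 sqr_ge0.
Qed.

Lemma mnorm_ge0 A : 0 <= mnorm A.
Proof. exact: sqrtr_ge0. Qed.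

Lemma sqr_mnorm A : mnorm A ^+ 2 = msq A.
Proof. by rewrite sqr_sqrtr // msq_ge0. Qed.

Lemma msqZ c A : msq (c *: A) = c ^+ 2 * msq A.
Proof. by rewrite /msq minnerZl minnerZr mulrA expr2. Qed.

Lemma mnormZ c A : mnorm (c *: A) = `|c| * mnorm A.
Proof. by rewrite /mnorm msqZ sqrtrM ?sqr_ge0 // sqrtr_sqr. Qed.

Lemma mnormN A : mnorm (- A) = mnorm A.
Proof. by rewrite -scaleN1r mnormZ normrN normr1 mul1r. Qed.

Lemma mnormD A B : mnorm (A + B) <= mnorm A + mnorm B.
Proof.
rewrite /mnorm msqD; apply: quad_tri; rewrite ?msq_ge0 // => t.
have -> : msq A + 2 * t * minner A B + t ^+ 2 * msq B = msq (A + t *: B) by rewrite msqD msqZ minnerZr; ring.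
exact: msq_ge0.
Qed.

Lemma mnormB A B : mnorm (A - B) <= mnorm A + mnorm B.
Proof. by rewrite -(mnormN B) mnormD. Qed.

Lemma mnormBC A B : mnorm (A - B) = mnorm (B - A).
Proof. by rewrite -mnormN opprB. Qed.

Lemma mnorm0 : mnorm (0 : 'M[R]_(m, p)) = 0.
Proof. by rewrite -(scale0r 0) mnormZ normr0 mul0r. Qed.

End Mx.

Lemma minner_mul (R : realType) m p q (r : 'M[R]_(m, q)) (a : 'M[R]_(p, q)) (D : 'M[R]_(m, p)) :
  minner (r *m a^T) D = minner r (D *m a).
Proof.
rewrite /minner; apply: eq_bigr => i _.
under eq_bigr => j _ do rewrite mxE mulr_suml.
rewrite exchange_big /=; apply: eq_bigr => k _.
rewrite mxE mulr_sumr; apply: eq_bigr => j _; rewrite mxE; ring.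
Qed.

Lemma phi_diff (R : realType) (rho : R) m p (a : 'cV[R]_p) (V W : 'M[R]_(m, p)) (z b : 'cV[R]_m) :
  phi rho a V z b - phi rho a W z b =
  minner (gradW rho a W z b) (V - W) + rho / 2 * msq ((V - W) *m a).
Proof.
rewrite /phi /gradW.
have -> : z - V *m a - b = (z - W *m a - b) + (- ((V - W) *m a)).
  rewrite mulmxBl; apply/matrixP => i j; rewrite !mxE; ring.
rewrite msqD minnerZl minner_mul minnerNr /msq minnerNl minnerNr opprK.
set X := minner _ _; set Y := minner _ _; set Z := minner _ _. by field.
Qed.

Lemma opt_sub (R : realType) m p (Om : 'M[R]_(m, p) -> R) (G Wt Ws : 'M[R]_(m, p)) (th : R) :
  mconvex Om -> 0 <= th ->
  (forall V, minner G (Ws - Wt) + th / 2 * msq (Ws - Wt) + Om Ws <=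
             minner G (V - Wt) + th / 2 * msq (V - Wt) + Om V) ->
  forall V, 0 <= Om V - Om Ws + minner (G + th *: (Ws - Wt)) (V - Ws).
Proof.
move=> Hc th0 Hopt V.
apply: (@nonneg_lim _ _ (th / 2 * msq (V - Ws))).
  by rewrite mulr_ge0 ?msq_ge0 // divr_ge0.
move=> t /andP [t0 t1].
have hc := Hc V Ws t; rewrite (ltW t0) t1 /= in hc; have {}hc := hc isT.
have ho := Hopt (t *: V + (1 - t) *: Ws).
rewrite minnerDl minnerZl; move: ho.
have -> : t *: V + (1 - t) *: Ws - Wt = (Ws - Wt) + t *: (V - Ws).
  apply/matrixP => i j; rewrite !mxE; ring.
rewrite (minnerDr (Ws - Wt) (t *: (V - Ws)) G) (msqD (Ws - Wt)) !minnerZr msqZ.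
set a1 := minner G (Ws - Wt); set a2 := minner G (V - Ws);
set a3 := msq (Ws - Wt); set a4 := minner (Ws - Wt) (V - Ws); set a5 := msq (V - Ws).
set o := Om (t *: V + (1 - t) *: Ws).
move=> ho.
have e : t * (Om V - Om Ws + (a2 + th * a4)) + t ^+ 2 * (th / 2 * a5) =
   (a1 + t * a2 + th / 2 * (a3 + 2 * (t * a4) + t ^+ 2 * a5) + (t * Om V + (1 - t) * Om Ws))
   - (a1 + th / 2 * a3 + Om Ws).
  by field.
by rewrite e subr_ge0; apply: le_trans ho _; rewrite lerD2l.
Qed.

Lemma setW_eq (R : realType) n (W : Wfam R n) l V : setW R n W l V l = V.
Proof.
rewrite /setW; case: (l =P l) => [e|]; last by [].
by rewrite (eq_axiomK e).
Qed.

Lemma setW_neq (R : realType) n (W : Wfam R n) l V j : j != l -> setW R n W l V j = W j.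
Proof.
move=> ne; rewrite /setW; case: (l =P j) => [e|] //.
by exfalso; move: ne; rewrite -e eqxx.
Qed.

Lemma Fobj_setW (R : realType) n L x (rho : R) (loss : 'cV[R]_(n L) -> R) Om
  (W : Wfam R n) z a b l V V' : (1 <= l <= L)%N ->
  Fobj x rho loss Om (mkSt (setW R n W l V) z a b) - Fobj x rho loss Om (mkSt (setW R n W l V') z a b)
  = Om l V + phi rho (aa x a l.-1) V (z l) (b l) - (Om l V' + phi rho (aa x a l.-1) V' (z l) (b l)).
Proof.
move=> hl; rewrite /Fobj /=.
have lr : l \in index_iota 1 L.+1 by rewrite mem_index_iota ltnS.
have u : uniq (index_iota 1 L.+1) by apply: iota_uniq.
set s1 := \sum_(1 <= j < L.+1) Om j (setW R n W l V j).
set s2 := \sum_(1 <= j < L.+1) Om j (setW R n W l V' j).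
set s3 := \sum_(1 <= j < L.+1) phi rho (aa x a j.-1) (setW R n W l V j) (z j) (b j).
set s4 := \sum_(1 <= j < L.+1) phi rho (aa x a j.-1) (setW R n W l V' j) (z j) (b j).
have e1 : s1 - s2 = Om l V - Om l V'.
  rewrite /s1 /s2 -sumrB (sum_single u lr); first by rewrite !setW_eq.
  by move=> j ne; rewrite !setW_neq // subrr.
have e2 : s3 - s4 = phi rho (aa x a l.-1) V (z l) (b l) - phi rho (aa x a l.-1) V' (z l) (b l).
  rewrite /s3 /s4 -sumrB (sum_single u lr); first by rewrite !setW_eq.
  by move=> j ne; rewrite !setW_neq // subrr.
have : loss (z L) + s1 + s3 - (loss (z L) + s2 + s4) = (s1 - s2) + (s3 - s4) by ring.
move=> ->; rewrite e1 e2; ring.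
Qed.

Lemma lim_sub (R : realType) m p (f : 'M[R]_(m, p) -> R) (Ws g : 'M[R]_(m, p)) :
  (forall V, 0 <= f V - f Ws - minner g (V - Ws)) -> limiting_subgrad f Ws g.
Proof.
move=> H; exists (fun _ => Ws), (fun _ => g); split.
- by move=> e e0; exists 0%N => k _; rewrite subrr mnorm0.
- by move=> e e0; exists 0%N => k _; rewrite subrr normr0.
- move=> k e e0; exists 1 => // y _.
  apply: le_trans (H y); rewrite oppr_le0 mulr_ge0 ?mnorm_ge0 //; exact: ltW.
- by move=> e e0; exists 0%N => k _; rewrite subrr mnorm0.
Qed.

Lemma ex_bound (R : realType) m p (q : R) (u v w : 'M[R]_(m, p)) : 0 <= q <= 1 ->
  mnorm (u - ex q v w) <= mnorm (u - v) + mnorm (v - w).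
Proof.
move=> /andP [q0 q1].
have -> : u - ex q v w = (u - v) - q *: (v - w).
  rewrite /ex; apply/matrixP => i j; rewrite !mxE; ring.
apply: le_trans (mnormB _ _) _; rewrite lerD2l mnormZ ger0_norm //.
by rewrite -[X in _ <= X]mul1r ler_wpM2r // mnorm_ge0.
Qed.

Lemma sqrt4 (R : realType) (a b c d : R) : 0 <= a -> 0 <= b -> 0 <= c -> 0 <= d ->
  Num.sqrt (a + b + c + d) <= Num.sqrt a + Num.sqrt b + Num.sqrt c + Num.sqrt d.
Proof.
move=> a0 b0 c0 d0.
apply: le_trans (sqrt_add _ _) _; rewrite ?addr_ge0 // lerD2r.
apply: le_trans (sqrt_add _ _) _; rewrite ?addr_ge0 // lerD2r.
exact: sqrt_add.
Qed.

Lemma layer_bound (R : realType) (rho M th q1 q2 q3 : R) m p (an ac : 'cV[R]_p)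
  (Wn Wc Wp : 'M[R]_(m, p)) (zn zc zp bn bc bp : 'cV[R]_m) :
  0 <= q1 <= 1 -> 0 <= q2 <= 1 -> 0 <= q3 <= 1 -> 0 <= M -> 0 <= th ->
  grad_dist rho an (ex q3 an ac) Wn (ex q2 Wc Wp) zn (ex q3 zc zp) bn (ex q3 bc bp)
    <= M * quad_dist an (ex q3 an ac) Wn (ex q2 Wc Wp) zn (ex q3 zc zp) bn (ex q3 bc bp) ->
  mnorm (gradW rho an Wn zn bn - (gradW rho (ex q3 an ac) (ex q2 Wc Wp) (ex q3 zc zp) (ex q3 bc bp)
         + th *: (Wn - ex q1 Wc Wp)))
  <= (M + th) * (mnorm (Wn - Wc) + mnorm (Wc - Wp) + mnorm (an - ac) + mnorm (zn - zc)
                 + mnorm (zc - zp) + mnorm (bn - bc) + mnorm (bc - bp)).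
Proof.
move=> hq1 hq2 hq3 M0 th0 Hl.
set G := gradW rho (ex q3 an ac) (ex q2 Wc Wp) (ex q3 zc zp) (ex q3 bc bp).
set X := gradW rho an Wn zn bn.
have -> : X - (G + th *: (Wn - ex q1 Wc Wp)) = (X - G) - th *: (Wn - ex q1 Wc Wp).
  by rewrite opprD addrA.
apply: le_trans (mnormB _ _) _.
rewrite mnormZ ger0_norm //.
have h1 : mnorm (X - G) <= M * quad_dist an (ex q3 an ac) Wn (ex q2 Wc Wp) zn (ex q3 zc zp) bn (ex q3 bc bp).
  apply: le_trans Hl; rewrite /grad_dist /mnorm ler_wsqrtr //.
  have key : forall a b c d : R, 0 <= a -> 0 <= c -> 0 <= d -> b <= a + b + c + d.
    by move=> *; lra.
  by apply: key; exact: msq_ge0.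
have h2 : quad_dist an (ex q3 an ac) Wn (ex q2 Wc Wp) zn (ex q3 zc zp) bn (ex q3 bc bp)
   <= mnorm (an - ac) + (mnorm (Wn - Wc) + mnorm (Wc - Wp)) + (mnorm (zn - zc) + mnorm (zc - zp))
      + (mnorm (bn - bc) + mnorm (bc - bp)).
  apply: le_trans (sqrt4 _ _ _ _) _; rewrite ?msq_ge0 //.
  apply: lerD; [apply: lerD; [apply: lerD|]|].
  - by have := ex_bound an an ac hq3; rewrite subrr mnorm0 add0r.
  - exact: ex_bound.
  - exact: ex_bound.
  - exact: ex_bound.
have h3 : mnorm (Wn - ex q1 Wc Wp) <= mnorm (Wn - Wc) + mnorm (Wc - Wp) by exact: ex_bound.
move: h1 h2 h3.
have := mnorm_ge0 (Wn - Wc); have := mnorm_ge0 (Wc - Wp); have := mnorm_ge0 (an - ac).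
have := mnorm_ge0 (zn - zc); have := mnorm_ge0 (zc - zp); have := mnorm_ge0 (bn - bc).
have := mnorm_ge0 (bc - bp).
set d1 := mnorm (Wn - Wc); set d2 := mnorm (Wc - Wp); set d3 := mnorm (an - ac).
set d4 := mnorm (zn - zc); set d5 := mnorm (zc - zp); set d6 := mnorm (bn - bc).
set d7 := mnorm (bc - bp).
move=> g7 g6 g5 g4 g3 g2 g1 h1 h2 h3.
have h4 := ler_wpM2l M0 h2.
have h5 := ler_wpM2l th0 h3.
have h6 : th * (d1 + d2) <= th * (d1 + d2 + d3 + d4 + d5 + d6 + d7).
  apply: ler_wpM2l => //; lra.
have e : (M + th) * (d1 + d2 + d3 + d4 + d5 + d6 + d7) =
   M * (d3 + (d1 + d2) + (d4 + d5) + (d6 + d7)) + th * (d1 + d2 + d3 + d4 + d5 + d6 + d7).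
  ring.
clearbody d1 d2 d3 d4 d5 d6 d7. rewrite e; apply: lerD; last by apply: le_trans h5 h6.
exact: le_trans h1 h4.
Qed.

Lemma ex0 (R : realType) m p (u v : 'M[R]_(m, p)) : ex 0 u v = u.
Proof. by rewrite /ex scale0r addr0. Qed.

Lemma iter_u (R : realType) (p1 p2 p3 : R) m p (u : nat -> 'M[R]_(m, p)) j :
  iter_pts p1 p2 p3 u (u j).
Proof. by exists j; left. Qed.

Lemma iter_ex (R : realType) (p1 p2 p3 q : R) m p (u : nat -> 'M[R]_(m, p)) j :
  q = 0 \/ q \in [:: p1; p2; p3] -> iter_pts p1 p2 p3 u (ex q (u j.+1) (u j)).
Proof.
case=> [->|hq]; first by rewrite ex0; exists j.+1; left.
by exists j; right; exists q.
Qed.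

Lemma sumsq_tri7 (R : realType) (r : seq nat) (f1 f2 f3 f4 f5 f6 f7 : nat -> R) :
  Num.sqrt (\sum_(j <- r) (f1 j + f2 j + f3 j + f4 j + f5 j + f6 j + f7 j) ^+ 2) <=
  Num.sqrt (\sum_(j <- r) f1 j ^+ 2) + Num.sqrt (\sum_(j <- r) f2 j ^+ 2) +
  Num.sqrt (\sum_(j <- r) f3 j ^+ 2) + Num.sqrt (\sum_(j <- r) f4 j ^+ 2) +
  Num.sqrt (\sum_(j <- r) f5 j ^+ 2) + Num.sqrt (\sum_(j <- r) f6 j ^+ 2) +
  Num.sqrt (\sum_(j <- r) f7 j ^+ 2).
Proof.
apply: le_trans (sumsq_tri _ _ _) _; rewrite lerD2r.
apply: le_trans (sumsq_tri _ _ _) _; rewrite lerD2r.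
apply: le_trans (sumsq_tri _ _ _) _; rewrite lerD2r.
apply: le_trans (sumsq_tri _ _ _) _; rewrite lerD2r.
apply: le_trans (sumsq_tri _ _ _) _; rewrite lerD2r.
exact: sumsq_tri.
Qed.

Lemma Anorm_shift (R : realType) n L (x : 'cV[R]_(n 0)) (a a' : Vfam R n) : (1 <= L)%N ->
  \sum_(1 <= j < L.+1) mnorm (aa x a j.-1 - aa x a' j.-1) ^+ 2 =
  \sum_(1 <= j < L) msq (Vsub a a' j).
Proof.
case: L => // L _.
rewrite big_add1 /= big_nat_recl // /= subrr mnorm0 expr0n add0r.
rewrite big_add1 /=; apply: eq_bigr => j _; by rewrite sqr_mnorm.
Qed.
Unset Implicit Arguments.
Theorem lemma4 (R : realType) (n : nat -> nat) (L : nat)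
  (x : 'cV[R]_(n 0)) (rho eps p1 p2 p3 : R)
  (h : nat -> R -> R) (loss : 'cV[R]_(n L) -> R)
  (Om : forall l : nat, 'M[R]_(n l, n l.-1) -> R)
  (S : nat -> St R n) (theta xi tau : nat -> nat -> R) (M : R) :
  (1 <= L)%N -> 0 < rho -> 0 < eps ->
  0 <= p1 < 1 -> 0 <= p2 < 1 -> 0 <= p3 < 1 ->
  (forall l, rcontinuous (h l)) ->
  mcontinuous loss -> mconvex loss ->
  (forall l, (1 <= l <= L)%N ->
     [/\ mcontinuous (Om l), mconvex (Om l) & forall W, 0 <= Om l W]) ->
  (* F coercive over the constraint set *)
  coercive_on L (Fobj x rho loss Om) (constraint_set L eps h) ->
  (* the sequence is generated by TIAM *)
  (forall k, tiam_step x rho eps p1 p2 p3 h loss Om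
               (S k) (S k.+1) (S k.+2) (theta k) (xi k) (tau k)) ->
  (* M > 0 is a Lipschitz constant of grad phi_l on a bounded set containing
     all iterates and their extrapolations *)
  0 < M ->
  (forall l, (1 <= l <= L)%N ->
     [/\ bounded_set (iter_pts p1 p2 p3 (fun j => aa x (sa (S j)) l.-1)),
         bounded_set (iter_pts p1 p2 p3 (fun j => sW (S j) l)),
         bounded_set (iter_pts p1 p2 p3 (fun j => sz (S j) l)),
         bounded_set (iter_pts p1 p2 p3 (fun j => sb (S j) l)) &
       forall a a' W W' z z' b b',
         iter_pts p1 p2 p3 (fun j => aa x (sa (S j)) l.-1) a ->
         iter_pts p1 p2 p3 (fun j => aa x (sa (S j)) l.-1) a' ->
         iter_pts p1 p2 p3 (fun j => sW (S j) l) W ->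
         iter_pts p1 p2 p3 (fun j => sW (S j) l) W' ->
         iter_pts p1 p2 p3 (fun j => sz (S j) l) z ->
         iter_pts p1 p2 p3 (fun j => sz (S j) l) z' ->
         iter_pts p1 p2 p3 (fun j => sb (S j) l) b ->
         iter_pts p1 p2 p3 (fun j => sb (S j) l) b' ->
         grad_dist rho a a' W W' z z' b b' <= M * quad_dist a a' W W' z z' b b']) ->
  forall k : nat,
    let N := S k.+2 in let C := S k.+1 in let P := S k in
    let C1 := \big[Num.max/M]_(1 <= l < L.+1) (M + theta k l) in
    exists g : Wfam R n,
      (forall l, (1 <= l <= L)%N ->
         limiting_subgrad
           (fun V => Fobj x rho loss Om (mkSt (setW R n (sW N) l V) (sz N) (sa N) (sb N)))
           (sW N l) (g l)) /\
      Wnorm L g <=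
        C1 * (Wnorm L (Wsub (sW N) (sW C)) + Vnorm L (Vsub (sz N) (sz C))
              + Anorm L (Vsub (sa N) (sa C)) + Vnorm L (Vsub (sb N) (sb C))
              + Wnorm L (Wsub (sW C) (sW P)) + Vnorm L (Vsub (sb C) (sb P))
              + Vnorm L (Vsub (sz C) (sz P))).
Proof.
move=> hL hrho heps hp1 hp2 hp3 hh hlc hlcv hOm hcoer hstep hM hlip k N C P C1.
pose s := fun l => mnorm (sW N l - sW C l) + mnorm (sW C l - sW P l)
  + mnorm (aa x (sa N) l.-1 - aa x (sa C) l.-1) + mnorm (sz N l - sz C l)
  + mnorm (sz C l - sz P l) + mnorm (sb N l - sb C l) + mnorm (sb C l - sb P l).
have Hl : forall l, exists gl : 'M[R]_(n l, n l.-1), (1 <= l <= L)%N ->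
   limiting_subgrad (fun V => Fobj x rho loss Om (mkSt (setW R n (sW N) l V) (sz N) (sa N) (sb N)))
     (sW N l) gl /\ mnorm gl <= (M + theta k l) * s l.
{ move=> l; case hl: (1 <= l <= L)%N; last by exists 0.
  have [HW _ _ _ _] := hstep k.
  have hq : exists q1 q2 q3 : R, (q1 = 0 /\ q2 = 0 /\ q3 = 0 \/ q1 = p1 /\ q2 = p2 /\ q3 = p3) /\
      Wupd x rho Om P C l q1 q2 q3 (theta k l) N.
    case: (HW l hl) => [[hw _]|[_ hw]]; [exists p1, p2, p3 | exists 0, 0, 0]; split; auto.
  have [q1 [q2 [q3 [hqs hw]]]] := hq.
  case: hw => hth hopt _.
  have hp1' : 0 <= p1 <= 1 by case/andP: hp1 => a b; rewrite a ltW.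
  have hp2' : 0 <= p2 <= 1 by case/andP: hp2 => a b; rewrite a ltW.
  have hp3' : 0 <= p3 <= 1 by case/andP: hp3 => a b; rewrite a ltW.
  have b01 : 0 <= (0 : R) <= 1 by rewrite lexx ler01.
  have [b1 b2 b3 m2 m3] : [/\ 0 <= q1 <= 1, 0 <= q2 <= 1, 0 <= q3 <= 1,
      q2 = 0 \/ q2 \in [:: p1; p2; p3] & q3 = 0 \/ q3 \in [:: p1; p2; p3]].
    case: hqs => [[-> [-> ->]]|[-> [-> ->]]]; split; auto;
      by right; rewrite !inE eqxx ?orbT.
  have [_ hc _] := hOm l hl.
  set an := aa x (sa N) l.-1.
  set G := gradW rho (ex q3 an (aa x (sa C) l.-1)) (ex q2 (sW C l) (sW P l))
             (ex q3 (sz C l) (sz P l)) (ex q3 (sb C l) (sb P l)).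
  set Wt := ex q1 (sW C l) (sW P l).
  exists (gradW rho an (sW N l) (sz N l) (sb N l) - (G + theta k l *: (sW N l - Wt))) => _.
  split.
  - apply: lim_sub => V /=.
    have E := @Fobj_setW R n L x rho loss Om (sW N) (sz N) (sa N) (sb N) l V (sW N l) hl.
    rewrite E minnerBl.
    have o := opt_sub hc (ltW hth) hopt V.
    have pd := phi_diff rho an V (sW N l) (sz N l) (sb N l).
    have q0 : 0 <= rho / 2 * msq ((V - sW N l) *m an).
      by rewrite mulr_ge0 ?msq_ge0 // divr_ge0 // ltW.
    move: o pd q0.
    set A := Om l V; set B := Om l (sW N l); set Cc := minner (G + _) _.
    set D := phi _ _ V _ _; set E' := phi _ _ (sW N l) _ _.
    set F := minner (gradW _ _ _ _ _) _; set Gg := rho / 2 * _.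
    move=> o pd q0; lra.
  - have [_ _ _ _ Lip] := hlip l hl.
    apply: (layer_bound b1 b2 b3 (ltW hM) (ltW hth)).
    apply: Lip.
    + exact: (iter_u p1 p2 p3 (fun j => aa x (sa (S j)) l.-1) k.+2).
    + exact: (iter_ex (fun j => aa x (sa (S j)) l.-1) k.+1 m3).
    + exact: (iter_u p1 p2 p3 (fun j => sW (S j) l) k.+2).
    + exact: (iter_ex (fun j => sW (S j) l) k m2).
    + exact: (iter_u p1 p2 p3 (fun j => sz (S j) l) k.+2).
    + exact: (iter_ex (fun j => sz (S j) l) k m3).
    + exact: (iter_u p1 p2 p3 (fun j => sb (S j) l) k.+2).
    + exact: (iter_ex (fun j => sb (S j) l) k m3). }
pose g := fun l => proj1_sig (constructive_indefinite_description _ (Hl l)).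
have Hg : forall l, (1 <= l <= L)%N ->
   limiting_subgrad (fun V => Fobj x rho loss Om (mkSt (setW R n (sW N) l V) (sz N) (sa N) (sb N)))
     (sW N l) (g l) /\ mnorm (g l) <= (M + theta k l) * s l.
  by move=> l; exact: (proj2_sig (constructive_indefinite_description _ (Hl l))).
exists g; split; first by move=> l hl; exact: (Hg l hl).1.
have C1ge : forall l, (1 <= l <= L)%N -> M + theta k l <= C1.
  move=> l hl; apply: bigmax_le_seq; by rewrite mem_index_iota ltnS.
have C10 : 0 <= C1 by apply: le_trans (ltW hM) (bigmax_ge0_seq _ _ _).
have sge : forall l, 0 <= s l.
  by move=> l; rewrite /s !addr_ge0 ?mnorm_ge0.
rewrite /Wnorm.
apply: (le_trans (ler_wsqrtr (_ : _ <= \sum_(1 <= l < L.+1) (C1 * s l) ^+ 2))).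
  rewrite big_seq [X in _ <= X]big_seq; apply: ler_sum => l.
  rewrite mem_index_iota ltnS => hl.
  rewrite -sqr_mnorm !expr2; have [_ hb] := Hg l hl.
  have hb' : mnorm (g l) <= C1 * s l.
    exact: (le_trans hb (ler_wpM2r (sge l) (C1ge l hl))).
  by apply: ler_pM; rewrite ?mnorm_ge0.
under eq_bigr => l _ do rewrite exprMn.
rewrite -mulr_sumr sqrtrM ?sqr_ge0 // sqrtr_sqr ger0_norm //.
apply: ler_wpM2l => //.
apply: le_trans (sumsq_tri7 _ (fun l => mnorm (sW N l - sW C l)) (fun l => mnorm (sW C l - sW P l))
  (fun l => mnorm (aa x (sa N) l.-1 - aa x (sa C) l.-1)) (fun l => mnorm (sz N l - sz C l))
  (fun l => mnorm (sz C l - sz P l)) (fun l => mnorm (sb N l - sb C l))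
  (fun l => mnorm (sb C l - sb P l))) _.
have eW : forall W W' : Wfam R n, Num.sqrt (\sum_(1 <= j < L.+1) mnorm (W j - W' j) ^+ 2)
    = Wnorm L (Wsub W W').
  by move=> W W'; rewrite /Wnorm; congr Num.sqrt; apply: eq_bigr => j _; rewrite sqr_mnorm.
have eV : forall v v' : Vfam R n, Num.sqrt (\sum_(1 <= j < L.+1) mnorm (v j - v' j) ^+ 2)
    = Vnorm L (Vsub v v').
  by move=> v v'; rewrite /Vnorm; congr Num.sqrt; apply: eq_bigr => j _; rewrite sqr_mnorm.
have eA : Num.sqrt (\sum_(1 <= j < L.+1) mnorm (aa x (sa N) j.-1 - aa x (sa C) j.-1) ^+ 2)
    = Anorm L (Vsub (sa N) (sa C)).
  by rewrite /Anorm Anorm_shift.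
rewrite /= eW eW eA !eV.
rewrite -/(Wnorm L (Wsub (sW N) (sW C))) -/(Wnorm L (Wsub (sW C) (sW P))).
lra.
Qed.
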